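(* Let $\omega\in(0,1/2)$ and $\tau>0$. Suppose the test statistic $z$ satisfies $z\mid\lambda\sim\mathrm{N}(\lambda,1)$, with $\lambda\sim(1-\omega)\delta_0+\omega\,\mathrm{J}(\tau^2)$ under $\mathrm{H}_0$ and $\lambda\sim\omega\delta_0+(1-\omega)\mathrm{J}(\tau^2)$ under $\mathrm{H}_1$. Then the Bayes factor in favor of $\mathrm{H}_1$ is $$\mathrm{BF}^t_{10}(z\mid\tau^2,\omega)=\frac{\omega+(1-\omega)R}{(1-\omega)+\omega R},$$ where $R=m_1(z\mid\tau^2)/m_0(z)$, with $m_0(z)$ the $\mathrm{N}(0,1)$ density at $z$ and $m_1(z\mid\tau^2)=\int \phi(z-\lambda)\,\mathrm{J}(\lambda;\tau^2)\,d\lambda$, and $$R=(1+\tau^2)^{-3/2}\,{}_1F_1\!\left(\tfrac32,\tfrac12;\ \frac{\tau^2z^2}{2(1+\tau^2)}\right).$$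
   Context: $\delta_0$ is the point mass at $0$. $\mathrm{J}(\tau^2)$ is the normal-moment density of order 1: $\mathrm{J}(\lambda;\tau^2)=\frac{\lambda^2}{(2\tau^2)^{3/2}\Gamma(3/2)}\exp\!\big(-\frac{\lambda^2}{2\tau^2}\big)$, $\lambda\in\mathbb{R}$. $\phi$ is the standard normal density. ${}_1F_1(a,b;x)=\sum_{i\ge0}\frac{(a)_i}{(b)_i\,i!}x^i$ is the confluent hypergeometric function, $(a)_i$ the rising factorial. The Bayes factor is the ratio of the marginal density of $z$ under $\mathrm{H}_1$ to that under $\mathrm{H}_0$. *)

(* Defs.v *)
From Stdlib Require Import Reals.
From Coquelicot Require Import Coquelicot.
Open Scope R_scope.

Definition phi (x : R) : R := exp (- x ^ 2 / 2) / sqrt (2 * PI).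

Definition Gamma (s : R) : R :=
  RInt_gen (fun t => Rpower t (s - 1) * exp (- t)) (at_right 0) (Rbar_locally p_infty).

Definition Jdens (tau2 lam : R) : R :=
  lam ^ 2 / (Rpower (2 * tau2) (3 / 2) * Gamma (3 / 2)) * exp (- lam ^ 2 / (2 * tau2)).

Definition m0 (z : R) : R := phi z.

Definition m1 (tau2 z : R) : R :=
  RInt_gen (fun lam => phi (z - lam) * Jdens tau2 lam)
    (Rbar_locally m_infty) (Rbar_locally p_infty).

Fixpoint rising (a : R) (i : nat) : R :=
  match i with
  | O => 1
  | S k => rising a k * (a + INR k)
  end.

Definition hyp1F1 (a b x : R) : R :=
  Series (fun i => rising a i / (rising b i * INR (Stdlib.Arith.Factorial.fact i)) * x ^ i).

(* Marginal density of z when lambda ~ p0 delta_0 + (1 - p0) J(tau2), by linearity of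
   the integral against the mixture prior. *)
Definition mix_marginal (p0 tau2 z : R) : R :=
  p0 * m0 z + (1 - p0) * m1 tau2 z.

Definition BF10 (tau2 omega z : R) : R :=
  mix_marginal omega tau2 z / mix_marginal (1 - omega) tau2 z.

(* Main.v *)
Require Import Defs.
From Stdlib Require Import Reals Lra.
From Coquelicot Require Import Coquelicot.
Open Scope R_scope.

Definition g (u : R) : R := exp (- u ^ 2 / 2).
Definition Phi (b : R) : R := RInt g 0 b.

Lemma g_cont x : continuous g x.
Proof. apply (ex_derive_continuous (K:=R_AbsRing) (V:=R_NormedModule)). unfold g. auto_derive. easy. Qed.

Lemma g_pos x : 0 < g x.
Proof. apply exp_pos. Qed.

Lemma ex_RInt_g a b : ex_RInt g a b.
Proof. apply (ex_RInt_continuous (V:=R_CompleteNormedModule)). intros; apply g_cont. Qed.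

Lemma Phi_deriv x : is_derive Phi x (g x).
Proof.
  apply (is_derive_RInt g Phi 0 x).
  - apply filter_forall. intros y. unfold Phi. apply (RInt_correct (V:=R_CompleteNormedModule)), ex_RInt_g.
  - apply g_cont.
Qed.

Lemma Phi_diff x y : Phi y - Phi x = RInt g x y.
Proof.
  unfold Phi. rewrite <- (RInt_Chasles g 0 x y) by apply ex_RInt_g.
  change (plus ?a ?b) with (a + b). ring.
Qed.

Lemma Phi_incr x y : x <= y -> Phi x <= Phi y.
Proof.
  intros H. cut (0 <= Phi y - Phi x). lra.
  rewrite Phi_diff. apply RInt_ge_0; auto. apply ex_RInt_g.
  intros; left; apply g_pos.
Qed.

Lemma Phi_0 : Phi 0 = 0.
Proof. unfold Phi. rewrite RInt_point. reflexivity. Qed.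

Lemma Phi_odd x : Phi (- x) = - Phi x.
Proof.
  unfold Phi.
  assert (H := RInt_comp_lin g (-1) 0 0 x).
  replace (-1 * 0 + 0) with 0 in H by ring.
  replace (-1 * x + 0) with (-x) in H by ring.
  rewrite <- H by apply ex_RInt_g.
  change (- RInt g 0 x) with (opp (RInt g 0 x)).
  rewrite <- (RInt_opp (V:=R_CompleteNormedModule)) by apply ex_RInt_g.
  apply RInt_ext. intros y _. unfold g. change (scal ?a ?b) with (a * b).
  change (opp ?a) with (- a). ring_simplify (-1 * y + 0). 
  replace ((- y)^2) with (y^2) by ring. ring_simplify. reflexivity.
Qed.

Lemma Phi_ub x : Phi x <= exp (1/2).
Proof.
  destruct (Rle_or_lt x 0) as [Hx|Hx].
  - apply Rle_trans with (Phi 0). apply Phi_incr; auto. rewrite Phi_0. left; apply exp_pos.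
  - unfold Phi.
    assert (Hi : is_RInt (fun u => exp (1/2 - u)) 0 x
                   (minus (- exp (1/2 - x)) (- exp (1/2 - 0)))).
    { apply (is_RInt_derive (fun u => - exp (1/2 - u))).
      - intros; auto_derive; auto. unfold Rminus; ring.
      - intros; apply (ex_derive_continuous (K:=R_AbsRing) (V:=R_NormedModule)); auto_derive; auto. }
    apply Rle_trans with (RInt (fun u => exp (1/2 - u)) 0 x).
    + apply RInt_le. lra. apply ex_RInt_g. eexists; eauto.
      intros u Hu. unfold g. destruct (Req_dec (- u ^ 2 / 2) (1/2 - u)) as [E|E].
      rewrite E; lra. left; apply exp_increasing. assert (- u ^ 2 / 2 <= 1/2 - u) by (assert (0 <= (u-1)^2) by apply pow2_ge_0; lra). lra.
    + rewrite (is_RInt_unique _ _ _ _ Hi). change (minus ?a ?b) with (a - b).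
      assert (0 < exp (1/2 - x)) by apply exp_pos. replace (1/2 - 0) with (1/2) by ring. lra.
Qed.

Lemma Phi_lb x : - exp (1/2) <= Phi x.
Proof. replace x with (- - x) by ring. rewrite Phi_odd. generalize (Phi_ub (-x)). lra. Qed.

Lemma ball_R (c e y : R) : Rabs (y - c) < e -> ball c e y.
Proof. intros H. exact H. Qed.

Lemma mono_lim (F : R -> R) (M : R) :
  (forall x y, x <= y -> F x <= F y) -> (forall x, F x <= M) ->
  exists L : R, is_lim F p_infty L /\ (forall x, F x <= L).
Proof.
  intros Hm Hb.
  destruct (completeness (fun y => exists x, y = F x)) as [L [HL1 HL2]].
  - exists M. intros y [x ->]. apply Hb.
  - exists (F 0), 0. reflexivity.
  - exists L. split.
    + intros P [e He]. 
      destruct (Classical_Prop.classic (exists x0, L - e < F x0)) as [[x0 Hx0]|Hn].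
      * exists x0. intros x Hx. apply He. apply ball_R.
        assert (F x <= L) by (apply HL1; eauto).
        assert (F x0 <= F x) by (apply Hm; lra).
        apply Rabs_def1; lra.
      * exfalso. assert (L <= L - e).
        { apply HL2. intros y [x ->]. destruct (Rle_or_lt (F x) (L - e)); auto.
          exfalso; apply Hn; eauto. }
        destruct e; simpl in *; lra.
    + intros x; apply HL1; eauto.
Qed.

Lemma g_expinv u : g u * exp (u^2/2) = 1.
Proof. unfold g. rewrite <- exp_plus. replace (- u ^ 2 / 2 + u ^ 2 / 2) with 0 by field. apply exp_0. Qed.

Lemma ug_small (e u : R) : 0 < e -> 2 / e < Rabs u -> Rabs (u * g u) < e.
Proof.
  intros He Hu.
  assert (HE := exp_ineq1_le (u^2/2)).
  assert (Hg := g_expinv u). assert (Hgp := g_pos u).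
  rewrite Rabs_mult, (Rabs_pos_eq (g u)) by lra.
  assert (Hu2 : u ^ 2 = Rabs u ^ 2) by (rewrite pow2_abs; reflexivity).
  set (a := Rabs u) in *. set (E := exp (u^2/2)) in *.
  assert (H2 : 2 < e * a).
  { apply Rmult_lt_compat_l with (r := e) in Hu; auto. field_simplify in Hu; lra. }
  assert (0 < a) by (assert (0 < 2/e) by (apply Rdiv_lt_0_compat; lra); lra).
  (* a * g < e  <=  a < e * E since g*E = 1 *)
  assert (a < e * E) by nra.
  nra.
Qed.

Lemma g_small (e u : R) : 0 < e -> 1 / e < Rabs u -> g u < e.
Proof.
  intros He Hu.
  assert (HE := exp_ineq1_le (u^2/2)).
  assert (Hg := g_expinv u). assert (Hgp := g_pos u).
  assert (Hu2 : u ^ 2 = Rabs u ^ 2) by (rewrite pow2_abs; reflexivity).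
  set (a := Rabs u) in *. set (E := exp (u^2/2)) in *.
  assert (H2 : 1 < e * a).
  { apply Rmult_lt_compat_l with (r := e) in Hu; auto. field_simplify in Hu; lra. }
  assert (0 < a) by (assert (0 < 1/e) by (apply Rdiv_lt_0_compat; lra); lra).
  assert (a <= E) by nra.
  nra.
Qed.

Lemma lim_ug_p : is_lim (fun u => u * g u) p_infty 0.
Proof.
  intros P [e He]. exists (2 / e). intros x Hx. apply He. apply ball_R.
  rewrite Rminus_0_r. apply ug_small. destruct e; auto.
  assert (0 < 2/e) by (apply Rdiv_lt_0_compat; destruct e; simpl; lra).
  rewrite Rabs_pos_eq; lra.
Qed.

Lemma lim_ug_m : is_lim (fun u => u * g u) m_infty 0.
Proof.
  intros P [e He]. exists (- (2 / e)). intros x Hx. apply He. apply ball_R.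
  rewrite Rminus_0_r. apply ug_small. destruct e; auto.
  assert (0 < 2/e) by (apply Rdiv_lt_0_compat; destruct e; simpl; lra).
  rewrite Rabs_left; lra.
Qed.

Lemma lim_g_p : is_lim g p_infty 0.
Proof.
  intros P [e He]. exists (1 / e). intros x Hx. apply He. apply ball_R.
  rewrite Rminus_0_r. rewrite Rabs_pos_eq by (left; apply g_pos). apply g_small. destruct e; auto.
  assert (0 < 1/e) by (apply Rdiv_lt_0_compat; destruct e; simpl; lra).
  rewrite Rabs_pos_eq; lra.
Qed.

Lemma lim_g_m : is_lim g m_infty 0.
Proof.
  intros P [e He]. exists (- (1 / e)). intros x Hx. apply He. apply ball_R.
  rewrite Rminus_0_r. rewrite Rabs_pos_eq by (left; apply g_pos). apply g_small. destruct e; auto.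
  assert (0 < 1/e) by (apply Rdiv_lt_0_compat; destruct e; simpl; lra).
  rewrite Rabs_left; lra.
Qed.


Lemma Phi_lim_m (Lp : R) : is_lim Phi p_infty Lp -> is_lim Phi m_infty (-Lp).
Proof.
  intros H. apply is_lim_ext with (fun x => - Phi (-x)).
  { intros; rewrite Phi_odd; ring. }
  apply (is_lim_opp (fun x => Phi (-x)) m_infty Lp).
  apply (is_lim_comp Phi (fun x => -x) m_infty Lp p_infty); auto.
  - apply (is_lim_opp (fun x => x) m_infty m_infty). apply is_lim_id.
  - exists 0. intros; discriminate.
Qed.

Definition Q (c1 c2 c3 w : R) : R := c1 * Phi w - c2 * (w * g w) - c3 * g w.

Lemma is_derive_eq (f : R -> R) x d1 d2 : is_derive f x d1 -> d1 = d2 -> is_derive f x d2.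
Proof. intros H ->; exact H. Qed.

Lemma Q_deriv c1 c2 c3 w :
  is_derive (Q c1 c2 c3) w ((c1 - c2) * g w + c2 * (w^2 * g w) + c3 * (w * g w)).
Proof.
  assert (H2 : is_derive (fun w => - c2 * (w * g w) - c3 * g w) w
                  (- c2 * (g w - w^2 * g w) + c3 * (w * g w))).
  { unfold g. auto_derive; auto. replace (- (w * (w * 1)) * / 2) with (- w ^ 2 / 2) by (unfold Rdiv; ring). field. }
  assert (H1 := is_derive_scal Phi w c1 _ (Phi_deriv w)).
  assert (H := is_derive_plus _ _ w _ _ H1 H2).
  apply (is_derive_ext _ _ w _ (fun t => eq_refl _)) in H.
  eapply is_derive_ext. 2: eapply is_derive_eq. 2: exact H.
  - intros t. unfold Q, plus; simpl. ring.
  - unfold plus; simpl. ring.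
Qed.

Lemma Q_lim_p (Lp : R) c1 c2 c3 : is_lim Phi p_infty Lp -> is_lim (Q c1 c2 c3) p_infty (c1 * Lp).
Proof.
  intros H. unfold Q.
  replace (c1 * Lp) with (c1 * Lp - c2 * 0 - c3 * 0) by ring.
  apply is_lim_minus'. apply is_lim_minus'.
  - apply (is_lim_scal_l Phi c1 p_infty Lp H).
  - apply (is_lim_scal_l _ c2 p_infty 0 lim_ug_p).
  - apply (is_lim_scal_l _ c3 p_infty 0 lim_g_p).
Qed.

Lemma Q_lim_m (Lp : R) c1 c2 c3 : is_lim Phi p_infty Lp -> is_lim (Q c1 c2 c3) m_infty (c1 * - Lp).
Proof.
  intros H. unfold Q.
  replace (c1 * - Lp) with (c1 * - Lp - c2 * 0 - c3 * 0) by ring.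
  apply is_lim_minus'. apply is_lim_minus'.
  - apply (is_lim_scal_l Phi c1 m_infty (-Lp) (Phi_lim_m _ H)).
  - apply (is_lim_scal_l _ c2 m_infty 0 lim_ug_m).
  - apply (is_lim_scal_l _ c3 m_infty 0 lim_g_m).
Qed.

Lemma Q_cont c1 c2 c3 w : continuous (Q c1 c2 c3) w.
Proof. apply (ex_derive_continuous (K:=R_AbsRing) (V:=R_NormedModule)). eexists; apply Q_deriv. Qed.

Lemma gen_deriv (Fa Fb : (R -> Prop) -> Prop) {FFa : Filter Fa} {FFb : Filter Fb}
  (D : R -> Prop) (f f' : R -> R) (la lb : R) :
  (forall x, D x -> is_derive f x (f' x)) ->
  (forall x, D x -> continuous f' x) ->
  (forall x, D x -> locally x D) ->
  filter_prod Fa Fb (fun ab => forall x, Rmin (fst ab) (snd ab) <= x <= Rmax (fst ab) (snd ab) -> D x) ->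
  filterlim f Fa (locally la) -> filterlim f Fb (locally lb) ->
  is_RInt_gen f' Fa Fb (lb - la).
Proof.
  intros Hd Hc Ho Hr Ha Hb.
  apply (is_RInt_gen_ext (V:=R_NormedModule) (Fa:=Fa) (Fb:=Fb) (Derive f)).
  - eapply filter_imp; [|exact Hr]. intros [a b] H x Hx. simpl in *.
    apply is_derive_unique, Hd, H; lra.
  - apply is_RInt_gen_Derive; auto.
    + eapply filter_imp; [|exact Hr]. intros [a b] H x Hx. eexists; apply Hd, H; auto.
    + eapply filter_imp; [|exact Hr]. intros [a b] H x Hx.
      apply (continuous_ext_loc (T:=R_UniformSpace) (U:=R_UniformSpace) _ f').
      * eapply filter_imp; [|apply Ho, H, Hx]. intros y Hy. symmetry; apply is_derive_unique, Hd, Hy.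
      * apply Hc, H, Hx.
Qed.

Lemma lin_lim_p mu s : 0 < s -> is_lim (fun l => (l - mu) / s) p_infty p_infty.
Proof.
  intros Hs P [M HM]. exists (mu + s * M). intros x Hx. apply HM.
  apply Rmult_lt_reg_r with s; auto. unfold Rdiv. rewrite Rmult_assoc, Rinv_l by lra. lra.
Qed.

Lemma lin_lim_m mu s : 0 < s -> is_lim (fun l => (l - mu) / s) m_infty m_infty.
Proof.
  intros Hs P [M HM]. exists (mu + s * M). intros x Hx. apply HM.
  apply Rmult_lt_reg_r with s; auto. unfold Rdiv. rewrite Rmult_assoc, Rinv_l by lra. lra.
Qed.

Lemma main_int (Lp mu s : R) : 0 < s -> is_lim Phi p_infty Lp ->
  is_RInt_gen (fun l => l^2 * g ((l - mu)/s)) (Rbar_locally m_infty) (Rbar_locally p_infty)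
    (2 * ((mu^2 + s^2) * s) * Lp).
Proof.
  intros Hs HL.
  set (c1 := (mu^2 + s^2) * s).
  replace (2 * c1 * Lp) with (c1 * Lp - c1 * - Lp) by ring.
  apply (gen_deriv _ _ (fun _ => True) (fun l => Q c1 (s^3) (2 * mu * s^2) ((l - mu)/s))).
  - intros x _.
    assert (Hw : is_derive (fun l => (l - mu)/s) x (/ s)).
    { auto_derive; auto. field; lra. }
    eapply is_derive_eq. apply (is_derive_comp (Q c1 (s^3) (2 * mu * s^2)) _ x _ _ (Q_deriv _ _ _ _) Hw).
    unfold scal; simpl; unfold mult; simpl. unfold c1.

    set (G := g ((x - mu)/s)). field. lra.
  - intros x _. apply (ex_derive_continuous (K:=R_AbsRing) (V:=R_NormedModule)).
    unfold g; auto_derive; auto.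
  - intros; apply filter_true.
  - apply filter_forall; auto.
  - apply (is_lim_comp (Q c1 (s^3) (2 * mu * s^2)) (fun l => (l - mu)/s) m_infty (c1 * - Lp) m_infty).
    apply Q_lim_m; auto. apply lin_lim_m; auto. exists 0; intros; discriminate.
  - apply (is_lim_comp (Q c1 (s^3) (2 * mu * s^2)) (fun l => (l - mu)/s) p_infty (c1 * Lp) p_infty).
    apply Q_lim_p; auto. apply lin_lim_p; auto. exists 0; intros; discriminate.
Qed.

Lemma sqrt_lim_p : is_lim (fun t => sqrt (2 * t)) p_infty p_infty.
Proof.
  intros P [M HM]. exists (M^2). intros x Hx. apply HM.
  destruct (Rle_or_lt M 0) as [H|H].
  - apply Rle_lt_trans with 0; auto. apply sqrt_lt_R0.
    assert (0 <= M^2) by apply pow2_ge_0. lra.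
  - rewrite <- (sqrt_pow2 M) by lra. apply sqrt_lt_1_alt.
    split. apply pow2_ge_0. assert (0 <= M^2) by apply pow2_ge_0. lra.
Qed.

Lemma gamma_is (Lp : R) : is_lim Phi p_infty Lp ->
  is_RInt_gen (fun t => sqrt t * exp (- t)) (at_right 0) (Rbar_locally p_infty) (Lp / sqrt 2).
Proof.
  intros HL.
  assert (H2 : 0 < sqrt 2) by (apply sqrt_lt_R0; lra).
  replace (Lp / sqrt 2) with (/ sqrt 2 * (1 * Lp) - / sqrt 2 * Q 1 1 0 0).
  2:{ unfold Q. rewrite Phi_0. field. lra. }
  apply (gen_deriv _ _ (fun t => 0 < t) (fun t => / sqrt 2 * Q 1 1 0 (sqrt (2 * t)))).
  - intros t Ht.
    assert (Hs : is_derive (fun t => sqrt (2 * t)) t (2 / (2 * sqrt (2 * t)))).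
    { apply (is_derive_sqrt (fun t => 2 * t)). auto_derive; auto; ring. lra. }
    eapply is_derive_eq. apply is_derive_scal.
    apply (is_derive_comp (Q 1 1 0) _ t _ _ (Q_deriv _ _ _ _) Hs).
    unfold scal; simpl; unfold mult; simpl.
    assert (Ht2 : 0 < sqrt t) by (apply sqrt_lt_R0; lra).
    rewrite sqrt_mult by lra.
    replace (g (sqrt 2 * sqrt t)) with (exp (- t)).
    2:{ unfold g. f_equal. rewrite Rpow_mult_distr, !pow2_sqrt by lra. field. }
    field. lra.
  - intros x Hx. apply (ex_derive_continuous (K:=R_AbsRing) (V:=R_NormedModule)).
    auto_derive; auto.
  - intros x Hx. apply open_gt; auto.
  - apply (Filter_prod _ _ _ (fun a => 0 < a) (fun b => 0 < b)).
    + exists (mkposreal 1 Rlt_0_1); intros y _ Hy; exact Hy.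
    + hnf; exists 0; auto.
    + intros a b Ha Hb x Hx. simpl in Hx. apply Rlt_le_trans with (Rmin a b); [|lra].
      apply Rmin_glb_lt; auto.
  - assert (A : filterlim (fun t => sqrt (2 * t)) (at_right 0) (locally 0)).
    { apply (filterlim_filter_le_1 (F := locally 0)). apply filter_le_within.
      assert (H0 : continuous (fun t => sqrt (2 * t)) 0).
      { apply continuous_sqrt_comp. apply (ex_derive_continuous (K:=R_AbsRing) (V:=R_NormedModule)).
        auto_derive; auto. }
      unfold continuous in H0. rewrite Rmult_0_r, sqrt_0 in H0. exact H0. }
    assert (B : continuous (fun w => / sqrt 2 * Q 1 1 0 w) 0).
    { apply (ex_derive_continuous (K:=R_AbsRing) (V:=R_NormedModule)).
      eexists. apply is_derive_scal, Q_deriv. }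
    exact (filterlim_comp _ _ _ _ _ _ _ _ A B).
  - apply (is_lim_comp (fun w => / sqrt 2 * Q 1 1 0 w) (fun t => sqrt (2 * t)) p_infty
             (/ sqrt 2 * (1 * Lp)) p_infty).
    + apply (is_lim_scal_l (Q 1 1 0) (/ sqrt 2) p_infty (1 * Lp)). apply Q_lim_p; auto.
    + apply sqrt_lim_p.
    + exists 0; intros; discriminate.
Qed.

Lemma gamma_val (Lp : R) : is_lim Phi p_infty Lp -> Gamma (3/2) = Lp / sqrt 2.
Proof.
  intros HL. unfold Gamma.
  apply (is_RInt_gen_unique (V:=R_CompleteNormedModule)).
  - apply (is_RInt_gen_ext (V:=R_NormedModule) (Fa:=at_right 0) (Fb:=Rbar_locally p_infty)
             (fun t => sqrt t * exp (- t))).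
    + apply (Filter_prod _ _ _ (fun a => 0 < a) (fun b => 0 < b)).
      * exists (mkposreal 1 Rlt_0_1); intros y _ Hy; exact Hy.
      * hnf; exists 0; auto.
      * intros a b Ha Hb x Hx. simpl in Hx.
        assert (0 < x) by (apply Rlt_trans with (Rmin a b); [apply Rmin_glb_lt|]; lra).
        replace (3/2 - 1) with (/ 2) by field. rewrite Rpower_sqrt; auto.
    + apply gamma_is; auto.
Qed.

Lemma rising_rel i : rising (3/2) i * (1/2) = rising (1/2) i * (1/2 + INR i).
Proof.
  induction i as [|i IH]. simpl; field. cbn [rising].
  rewrite S_INR.
  replace (rising (3 / 2) i * (3 / 2 + INR i) * (1 / 2)) with
    ((rising (3 / 2) i * (1/2)) * (3 / 2 + INR i)) by ring.
  rewrite IH. field.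
Qed.

Lemma rising_pos i : 0 < rising (1/2) i.
Proof.
  induction i as [|i IH]; cbn [rising]. lra. apply Rmult_lt_0_compat; auto.
  assert (0 <= INR i) by apply pos_INR. lra.
Qed.

Lemma exp_series x : is_series (fun i => x ^ i / INR (Factorial.fact i)) (exp x).
Proof.
  assert (H := is_exp_Reals x). unfold is_pseries in H.
  eapply is_series_ext; [|exact H]. intros n.
  change (scal ?a ?b) with (a * b). rewrite pow_n_pow. reflexivity.
Qed.

Lemma eqR (a b : R) : a = b -> a = b.
Proof. auto. Qed.

Lemma series_eq (a : nat -> R) l l' : is_series a l -> l = l' -> is_series a l'.
Proof. intros H <-; exact H. Qed.

Lemma nexp_series x : is_series (fun i => INR i * (x ^ i / INR (Factorial.fact i))) (x * exp x).
Proof.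
  apply is_series_decr_1.
  assert (H := is_series_scal x _ _ (exp_series x)).
  eapply is_series_ext; [|eapply series_eq; [exact H|]].
  2:{ apply eqR. change (plus ?a ?b) with (a + b). change (opp ?a) with (- a).
      change (scal ?a ?b) with (a * b). simpl. field. } intros n. cbv beta.
  change (scal ?a ?b) with (a * b). apply eqR.
  rewrite fact_simpl, mult_INR, <- tech_pow_Rmult.
  assert (INR (Factorial.fact n) <> 0) by apply INR_fact_neq_0.
  assert (INR (S n) <> 0) by (apply not_0_INR; discriminate).
  field. auto.
Qed.

Lemma hyp_val x : hyp1F1 (3/2) (1/2) x = exp x * (1 + 2 * x).
Proof.
  unfold hyp1F1. apply is_series_unique.
  assert (H := is_series_plus _ _ _ _ (exp_series x) (is_series_scal 2 _ _ (nexp_series x))).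
  replace (exp x * (1 + 2 * x)) with (plus (exp x) (scal 2 (x * exp x))).
  2:{ apply eqR. change (plus ?a ?b) with (a + b). change (scal ?a ?b) with (a * b). ring. }
  eapply is_series_ext; [|exact H]. intros n.
  change (plus ?a ?b) with (a + b). change (scal ?a ?b) with (a * b).
  assert (Hr := rising_rel n). assert (Hp := rising_pos n).
  assert (INR (Factorial.fact n) <> 0) by apply INR_fact_neq_0.
  replace (rising (3/2) n) with (rising (1/2) n * (1/2 + INR n) * 2) by lra.
  apply eqR. field. split; auto. lra.
Qed.

Lemma Lp_pos (Lp : R) : (forall x, Phi x <= Lp) -> 0 < Lp.
Proof.
  intros H. apply Rlt_le_trans with (Phi 1); auto. unfold Phi.
  apply RInt_gt_0. lra. intros; apply g_pos. intros; apply g_cont.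
Qed.

Theorem proposition4 (omega tau2 z : R) :
  0 < omega < 1 / 2 -> 0 < tau2 ->
  ex_RInt_gen (fun lam => phi (z - lam) * Jdens tau2 lam)
    (Rbar_locally m_infty) (Rbar_locally p_infty) /\
  (let Rr := m1 tau2 z / m0 z in
   BF10 tau2 omega z = (omega + (1 - omega) * Rr) / ((1 - omega) + omega * Rr) /\
   Rr = Rpower (1 + tau2) (- (3 / 2)) *
        hyp1F1 (3 / 2) (1 / 2) (tau2 * z ^ 2 / (2 * (1 + tau2)))).
Proof.
  intros [Hw1 Hw2] Ht.
  destruct (mono_lim Phi (exp (1/2)) Phi_incr Phi_ub) as [Lp [HL HLb]].
  assert (HLp := Lp_pos Lp HLb).
  assert (HG := gamma_val Lp HL).
  assert (H2 : 0 < sqrt 2) by (apply sqrt_lt_R0; lra).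
  assert (HPI : 0 < sqrt (2 * PI)) by (apply sqrt_lt_R0; generalize PI_RGT_0; lra).
  assert (HP : 0 < Rpower (2 * tau2) (3/2)) by (unfold Rpower; apply exp_pos).
  set (s := sqrt (tau2 / (1 + tau2))).
  assert (Hs : 0 < s) by (apply sqrt_lt_R0; apply Rdiv_lt_0_compat; lra).
  assert (Hs2 : s ^ 2 = tau2 / (1 + tau2)) by (apply pow2_sqrt; left; apply Rdiv_lt_0_compat; lra).
  set (mu := z * tau2 / (1 + tau2)).
  set (Kc := exp (- z ^ 2 / (2 * (1 + tau2))) / (sqrt (2 * PI) * (Rpower (2 * tau2) (3/2) * Gamma (3/2)))).
  assert (Hmain : is_RInt_gen (fun lam => phi (z - lam) * Jdens tau2 lam)
                    (Rbar_locally m_infty) (Rbar_locally p_infty)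
                    (Kc * (2 * ((mu^2 + s^2) * s) * Lp))).
  { apply (is_RInt_gen_ext (V:=R_NormedModule) (Fa:=Rbar_locally m_infty) (Fb:=Rbar_locally p_infty)
             (fun lam => Kc * (lam^2 * g ((lam - mu)/s)))).
    - apply filter_forall. intros [a b] lam _.
      unfold phi, Jdens, g, Kc. rewrite HG.
      assert (HE : exp (- (z - lam) ^ 2 / 2) * exp (- lam ^ 2 / (2 * tau2)) =
                   exp (- z ^ 2 / (2 * (1 + tau2))) * exp (- ((lam - mu) / s) ^ 2 / 2)).
      { rewrite <- !exp_plus. f_equal.
        replace (((lam - mu) / s) ^ 2) with ((lam - mu) ^ 2 / s ^ 2) by (field; lra).
        rewrite Hs2. unfold mu. field. lra. }
      set (E1 := exp (- (z - lam) ^ 2 / 2)) in *.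
      set (E2 := exp (- lam ^ 2 / (2 * tau2))) in *.
      set (E3 := exp (- z ^ 2 / (2 * (1 + tau2)))) in *.
      set (E4 := exp (- ((lam - mu) / s) ^ 2 / 2)) in *.
      apply eqR. transitivity ((E1 * E2) * lam ^ 2 / (sqrt (2 * PI) * (Rpower (2 * tau2) (3 / 2) * (Lp / sqrt 2)))).
      + rewrite HE. field. repeat split; lra.
      + field. repeat split; lra.
    - apply (is_RInt_gen_scal (V:=R_NormedModule)). apply main_int; auto. }
  assert (Hm1 : m1 tau2 z = Kc * (2 * ((mu^2 + s^2) * s) * Lp)).
  { unfold m1. apply (is_RInt_gen_unique (V:=R_CompleteNormedModule)). exact Hmain. }
  assert (Hm0 : 0 < m0 z) by (unfold m0, phi; apply Rdiv_lt_0_compat; [apply exp_pos| auto]).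
  assert (HKc : 0 < Kc).
  { unfold Kc. rewrite HG. apply Rdiv_lt_0_compat. apply exp_pos.
    apply Rmult_lt_0_compat; auto. apply Rmult_lt_0_compat; auto. apply Rdiv_lt_0_compat; auto. }
  assert (Hm1p : 0 < m1 tau2 z).
  { rewrite Hm1. apply Rmult_lt_0_compat; auto. apply Rmult_lt_0_compat; auto.
    apply Rmult_lt_0_compat; [lra|]. apply Rmult_lt_0_compat; auto.
    assert (0 <= mu^2) by apply pow2_ge_0. assert (0 < s^2) by (apply pow_lt; auto). lra. }
  split.
  { exists (Kc * (2 * ((mu^2 + s^2) * s) * Lp)). exact Hmain. }
  cbv zeta. split.
  - unfold BF10, mix_marginal.
    field. repeat split; try lra. 
    + assert (0 < omega * m1 tau2 z) by (apply Rmult_lt_0_compat; auto).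
      assert (0 < (1 - omega) * m0 z) by (apply Rmult_lt_0_compat; lra). lra.
  - rewrite hyp_val, Hm1. unfold m0, phi, Kc. rewrite HG.
    replace (exp (- z ^ 2 / (2 * (1 + tau2)))) with
      (exp (tau2 * z ^ 2 / (2 * (1 + tau2))) * exp (- z ^ 2 / 2)).
    2:{ rewrite <- exp_plus. f_equal. field. lra. }
    replace (3/2) with (1 + / 2) by field.
    rewrite Rpower_Ropp, !Rpower_plus, !Rpower_1, !Rpower_sqrt by lra.
    unfold mu, s. rewrite sqrt_div by lra. rewrite (sqrt_mult 2 tau2) by lra.
    assert (Hq : sqrt tau2 * sqrt tau2 = tau2) by (apply sqrt_sqrt; lra).
    assert (Hr : sqrt (1 + tau2) * sqrt (1 + tau2) = 1 + tau2) by (apply sqrt_sqrt; lra).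
    assert (Hqp : 0 < sqrt tau2) by (apply sqrt_lt_R0; lra).
    assert (Hrp : 0 < sqrt (1 + tau2)) by (apply sqrt_lt_R0; lra).
    assert (HE1 := exp_pos (tau2 * z ^ 2 / (2 * (1 + tau2)))).
    assert (HE2 := exp_pos (- z ^ 2 / 2)).
    set (q := sqrt tau2) in *. set (r := sqrt (1 + tau2)) in *.
    set (X := exp (tau2 * z ^ 2 / (2 * (1 + tau2)))) in *.
    set (Y := exp (- z ^ 2 / 2)) in *.
    clearbody q r X Y.
    rewrite <- Hr. rewrite <- Hq.
    field. repeat split; lra.
Qed.
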